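(* Let $P,PA$ be labelings, $c$ a command and $\rho_1,\rho_2,\mu_1,\mu_2$ states. Assume $\mathtt b\notin\mathrm{UsedVars}(c)$, $\rho_1(\mathtt b)=\rho_2(\mathtt b)=0$, $|a|_{\mu_1}>0$ and $|a|_{\mu_2}>0$ for every array $a$, $P;PA\vdash_{\mathtt{true}}c$, $\rho_1\sim_P\rho_2$, $\mu_1\sim_{PA}\mu_2$, and $\langle c,\rho_1,\mu_1\rangle\approx\langle c,\rho_2,\mu_2\rangle$. Then $\langle\mathrm{FvSLH}_P(c),\rho_1,\mu_1,\mathtt{false}\rangle\approx_s\langle\mathrm{FvSLH}_P(c),\rho_2,\mu_2,\mathtt{false}\rangle$.
   Context: Language AWhile: scalar variables $X\in\mathcal V$, arrays $a\in\mathcal A$; $e::=n\mid X\mid\mathrm{op}_{\mathbb N}(e,\dots,e)\mid be\,?\,e_1:e_2$; $be::=\mathtt{true}\mid\mathtt{false}\mid\mathrm{cmp}(e,e)\mid\mathrm{op}_{\mathbb B}(be,\dots,be)$; $c::=\mathtt{skip}\mid X:=e\mid c_1;c_2\mid\mathtt{if}\ be\ \mathtt{then}\ c_1\ \mathtt{else}\ c_2\mid\mathtt{while}\ be\ \mathtt{do}\ c\mid X\leftarrow a[e]\mid a[e]\leftarrow e'$. Scalar state $\rho:\mathcal V\to\mathbb N$; array state $\mu$ with sizes $|a|_\mu$ and values $\mu(a)[i]$; $[\![\cdot]\!]_\rho$ pure evaluation. $\mathrm{UsedVars}(c)$: scalar variables occurring in $c$; $\mathtt b$ a reserved scalar variable.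 Sequential semantics: $X:=e\to\mathtt{skip}$ updating $X$; $c_1;c_2\xrightarrow{o}c_1';c_2$ if $c_1\xrightarrow{o}c_1'$; $\mathtt{skip};c\to c$; conditional goes to branch $v=[\![be]\!]_\rho$ observing $\mathrm{branch}(v)$; $\mathtt{while}\ be\ \mathtt{do}\ c\to\mathtt{if}\ be\ \mathtt{then}\ (c;\mathtt{while}\ be\ \mathtt{do}\ c)\ \mathtt{else}\ \mathtt{skip}$; $X\leftarrow a[ie]$ with $i=[\![ie]\!]_\rho<|a|_\mu$ sets $X:=\mu(a)[i]$ observing $\mathrm{read}(a,i)$; $a[ie]\leftarrow e$ with $i<|a|_\mu$ sets $\mu[a[i]\mapsto[\![e]\!]_\rho]$ observing $\mathrm{write}(a,i)$. $\langle c_1,\rho_1,\mu_1\rangle\approx\langle c_2,\rho_2,\mu_2\rangle$ iff for all multi-step executions $\langle c_k,\rho_k,\mu_k\rangle\xrightarrow{O_k}{}^*$ (any prefix), one of $O_1,O_2$ is a prefix of the other. Speculative semantics: configurations $\langle c,\rho,\mu,\beta\rangle$; non-observing rules as sequentially (flag kept, no directive). Conditional: with directive $\mathit{step}$ as sequentially; with $\mathit{force}$ go to branch $\neg[\![be]\!]_\rho$, set $\beta:=\mathtt{true}$; obs $\mathrm{branch}([\![be]\!]_\rho)$. Reads/writes with $\mathit{step}$ as sequentially. Read with $\mathrm{load}(a',j)$: requires $\beta=\mathtt{true}$, $i=[\![ie]\!]_\rho\ge|a|_\mu$, $j<|a'|_\mu$, sets $X:=\mu(a')[j]$, obs $\mathrm{read}(a,i)$.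 Write with $\mathrm{store}(a',j)$: requires $\beta=\mathtt{true}$, $i\ge|a|_\mu$, $j<|a'|_\mu$, sets $\mu[a'[j]\mapsto[\![e]\!]_\rho]$, obs $\mathrm{write}(a,i)$. $\langle c_1,\rho_1,\mu_1,\beta_1\rangle\approx_s\langle c_2,\rho_2,\mu_2,\beta_2\rangle$ iff for all $D,O_1,O_2$, whenever both multi-step with the same directive list $D$ producing $O_1,O_2$, $O_1=O_2$. Labels: $\mathtt{true}$=public, $\mathtt{false}$=secret; $\ell_1\sqsubseteq\ell_2$ iff $\ell_2=\mathtt{true}\Rightarrow\ell_1=\mathtt{true}$; $\ell_1\sqcup\ell_2=\ell_1\wedge\ell_2$. $P(e),P(be)$ public iff all variables occurring are public. $\rho_1\sim_P\rho_2$: agreement on public scalar variables; $\mu_1\sim_{PA}\mu_2$: agreement on sizes and contents of public arrays. IFC typing $P;PA\vdash_{pc}c$: $\mathtt{skip}$; $X:=e$ if $pc\sqcup P(e)\sqsubseteq P(X)$; $c_1;c_2$ if both typed under $pc$; $\mathtt{if}$ if both branches typed under $pc\sqcup P(be)$; $\mathtt{while}$ if body typed under $pc\sqcup P(be)$; $X\leftarrow a[i]$ if $pc\sqcup P(i)\sqcup PA(a)\sqsubseteq P(X)$; $a[i]\leftarrow e$ if $pc\sqcup P(i)\sqcup P(e)\sqsubseteq PA(a)$. Transformation $\mathrm{FvSLH}_P$: with $m(i)=(\mathtt b==1)\,?\,0:i$ and $B(be)=(\mathtt b==0\ \&\&\ be)$ if $P(be)=\mathtt{false}$, else $be$: $\mathtt{skip}$,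 $X:=e$ unchanged; sequences translated componentwise; $\mathtt{if}\ be\ \mathtt{then}\ c_1\ \mathtt{else}\ c_2\mapsto\mathtt{if}\ B(be)\ \mathtt{then}\ (\mathtt b:=B(be)\,?\,\mathtt b:1;[\![c_1]\!])\ \mathtt{else}\ (\mathtt b:=B(be)\,?\,1:\mathtt b;[\![c_2]\!])$; $\mathtt{while}\ be\ \mathtt{do}\ c\mapsto(\mathtt{while}\ B(be)\ \mathtt{do}\ (\mathtt b:=B(be)\,?\,\mathtt b:1;[\![c]\!]));\ \mathtt b:=B(be)\,?\,1:\mathtt b$; $X\leftarrow a[i]\mapsto (X\leftarrow a[i];\ X:=(\mathtt b==1)\,?\,0:X)$ if $P(X)=\mathtt{true}$ and $P(i)=\mathtt{true}$; otherwise $X\leftarrow a[m(i)]$ if $P(i)=\mathtt{false}$ and $X\leftarrow a[i]$ if $P(i)=\mathtt{true}$; $a[i]\leftarrow e\mapsto a[m(i)]\leftarrow e$ if $P(i)=\mathtt{false}$, unchanged otherwise. *)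

(* Defs.v *)
From Stdlib Require Import Strings.String Bool Arith List.
Import ListNotations.

Definition var := string.
Definition arr := string.

(* Arithmetic operators op_N and boolean operators op_B / comparisons cmp are
   arbitrary (binary) functions; unary/nullary ones are special cases. *)
Inductive aexp : Type :=
  | ANum (n : nat)
  | AId (X : var)
  | ABin (op : nat -> nat -> nat) (e1 e2 : aexp)
  | ACTIf (be : bexp) (e1 e2 : aexp)
with bexp : Type :=
  | BTrue
  | BFalse
  | BCmp (cmp : nat -> nat -> bool) (e1 e2 : aexp)
  | BBin (op : bool -> bool -> bool) (b1 b2 : bexp).

Inductive com : Type :=
  | Skip
  | Asgn (X : var) (e : aexp)
  | Seq (c1 c2 : com)
  | If (be : bexp) (c1 c2 : com)
  | While (be : bexp) (c : com)
  | ARead (X : var) (a : arr) (i : aexp)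
  | AWrite (a : arr) (i : aexp) (e : aexp).

Definition reg := var -> nat.
Definition mem := arr -> list nat.       (* array state mu: |a| = length (mu a) *)

Definition upd_reg (rho : reg) (X : var) (v : nat) : reg :=
  fun Y => if String.eqb Y X then v else rho Y.

Fixpoint upd_list (l : list nat) (i v : nat) : list nat :=
  match l, i with
  | [], _ => []
  | _ :: t, 0 => v :: t
  | h :: t, S i' => h :: upd_list t i' v
  end.

Definition upd_mem (mu : mem) (a : arr) (i v : nat) : mem :=
  fun a' => if String.eqb a' a then upd_list (mu a) i v else mu a'.

Fixpoint aeval (rho : reg) (e : aexp) : nat :=
  match e with
  | ANum n => n
  | AId X => rho X
  | ABin op e1 e2 => op (aeval rho e1) (aeval rho e2)
  | ACTIf be e1 e2 => if beval rho be then aeval rho e1 else aeval rho e2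
  end
with beval (rho : reg) (be : bexp) : bool :=
  match be with
  | BTrue => true
  | BFalse => false
  | BCmp cmp e1 e2 => cmp (aeval rho e1) (aeval rho e2)
  | BBin op b1 b2 => op (beval rho b1) (beval rho b2)
  end.

Inductive observation : Type :=
  | OBranch (v : bool)
  | ORead (a : arr) (i : nat)
  | OWrite (a : arr) (i : nat).

Definition obs := list observation.

Inductive seq_step : com * reg * mem -> obs -> com * reg * mem -> Prop :=
  | SS_Asgn : forall X e rho mu,
      seq_step (Asgn X e, rho, mu) [] (Skip, upd_reg rho X (aeval rho e), mu)
  | SS_Seq : forall c1 c1' c2 rho mu rho' mu' os,
      seq_step (c1, rho, mu) os (c1', rho', mu') ->
      seq_step (Seq c1 c2, rho, mu) os (Seq c1' c2, rho', mu')
  | SS_SeqSkip : forall c rho mu,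
      seq_step (Seq Skip c, rho, mu) [] (c, rho, mu)
  | SS_If : forall be c1 c2 rho mu,
      seq_step (If be c1 c2, rho, mu) [OBranch (beval rho be)]
               ((if beval rho be then c1 else c2), rho, mu)
  | SS_While : forall be c rho mu,
      seq_step (While be c, rho, mu) []
               (If be (Seq c (While be c)) Skip, rho, mu)
  | SS_ARead : forall X a ie rho mu i,
      aeval rho ie = i -> i < length (mu a) ->
      seq_step (ARead X a ie, rho, mu) [ORead a i]
               (Skip, upd_reg rho X (nth i (mu a) 0), mu)
  | SS_AWrite : forall a ie e rho mu i,
      aeval rho ie = i -> i < length (mu a) ->
      seq_step (AWrite a ie e, rho, mu) [OWrite a i]
               (Skip, rho, upd_mem mu a i (aeval rho e)).

Inductive seq_multi : com * reg * mem -> obs -> com * reg * mem -> Prop :=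
  | SM_Refl : forall cfg, seq_multi cfg [] cfg
  | SM_Trans : forall cfg1 cfg2 cfg3 os1 os2,
      seq_step cfg1 os1 cfg2 -> seq_multi cfg2 os2 cfg3 ->
      seq_multi cfg1 (os1 ++ os2) cfg3.

Definition prefix {A : Type} (l1 l2 : list A) : Prop := exists l, l2 = l1 ++ l.

Definition seq_same_obs (c1 : com) (rho1 : reg) (mu1 : mem)
                        (c2 : com) (rho2 : reg) (mu2 : mem) : Prop :=
  forall cfg1 cfg2 os1 os2,
    seq_multi (c1, rho1, mu1) os1 cfg1 ->
    seq_multi (c2, rho2, mu2) os2 cfg2 ->
    prefix os1 os2 \/ prefix os2 os1.

Inductive direction : Type :=
  | DStep
  | DForce
  | DLoad (a : arr) (j : nat)
  | DStore (a : arr) (j : nat).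

Definition dirs := list direction.

Inductive spec_step : com * reg * mem * bool -> dirs -> obs -> com * reg * mem * bool -> Prop :=
  | Spec_Asgn : forall X e rho mu bf,
      spec_step (Asgn X e, rho, mu, bf) [] [] (Skip, upd_reg rho X (aeval rho e), mu, bf)
  | Spec_Seq : forall c1 c1' c2 rho mu bf rho' mu' bf' ds os,
      spec_step (c1, rho, mu, bf) ds os (c1', rho', mu', bf') ->
      spec_step (Seq c1 c2, rho, mu, bf) ds os (Seq c1' c2, rho', mu', bf')
  | Spec_SeqSkip : forall c rho mu bf,
      spec_step (Seq Skip c, rho, mu, bf) [] [] (c, rho, mu, bf)
  | Spec_If : forall be c1 c2 rho mu bf,
      spec_step (If be c1 c2, rho, mu, bf) [DStep] [OBranch (beval rho be)]
                ((if beval rho be then c1 else c2), rho, mu, bf)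
  | Spec_If_F : forall be c1 c2 rho mu bf,
      spec_step (If be c1 c2, rho, mu, bf) [DForce] [OBranch (beval rho be)]
                ((if negb (beval rho be) then c1 else c2), rho, mu, true)
  | Spec_While : forall be c rho mu bf,
      spec_step (While be c, rho, mu, bf) [] []
                (If be (Seq c (While be c)) Skip, rho, mu, bf)
  | Spec_ARead : forall X a ie rho mu bf i,
      aeval rho ie = i -> i < length (mu a) ->
      spec_step (ARead X a ie, rho, mu, bf) [DStep] [ORead a i]
                (Skip, upd_reg rho X (nth i (mu a) 0), mu, bf)
  | Spec_ARead_U : forall X a ie rho mu i a' j,
      aeval rho ie = i -> length (mu a) <= i -> j < length (mu a') ->
      spec_step (ARead X a ie, rho, mu, true) [DLoad a' j] [ORead a i]
                (Skip, upd_reg rho X (nth j (mu a') 0), mu, true)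
  | Spec_AWrite : forall a ie e rho mu bf i,
      aeval rho ie = i -> i < length (mu a) ->
      spec_step (AWrite a ie e, rho, mu, bf) [DStep] [OWrite a i]
                (Skip, rho, upd_mem mu a i (aeval rho e), bf)
  | Spec_AWrite_U : forall a ie e rho mu i a' j,
      aeval rho ie = i -> length (mu a) <= i -> j < length (mu a') ->
      spec_step (AWrite a ie e, rho, mu, true) [DStore a' j] [OWrite a i]
                (Skip, rho, upd_mem mu a' j (aeval rho e), true).

Inductive spec_multi : com * reg * mem * bool -> dirs -> obs -> com * reg * mem * bool -> Prop :=
  | SpM_Refl : forall cfg, spec_multi cfg [] [] cfg
  | SpM_Trans : forall cfg1 cfg2 cfg3 ds1 ds2 os1 os2,
      spec_step cfg1 ds1 os1 cfg2 -> spec_multi cfg2 ds2 os2 cfg3 ->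
      spec_multi cfg1 (ds1 ++ ds2) (os1 ++ os2) cfg3.

Definition spec_same_obs (c1 : com) (rho1 : reg) (mu1 : mem) (b1 : bool)
                         (c2 : com) (rho2 : reg) (mu2 : mem) (b2 : bool) : Prop :=
  forall ds cfg1 cfg2 os1 os2,
    spec_multi (c1, rho1, mu1, b1) ds os1 cfg1 ->
    spec_multi (c2, rho2, mu2, b2) ds os2 cfg2 ->
    os1 = os2.

Definition label := bool.   (* true = public, false = secret *)
Definition join (l1 l2 : label) : label := l1 && l2.
Definition can_flow (l1 l2 : label) : bool := l1 || negb l2.

Definition pub_vars := var -> label.
Definition pub_arrs := arr -> label.

Fixpoint label_of_aexp (P : pub_vars) (e : aexp) : label :=
  match e with
  | ANum _ => true
  | AId X => P X
  | ABin _ e1 e2 => join (label_of_aexp P e1) (label_of_aexp P e2)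
  | ACTIf be e1 e2 =>
      join (label_of_bexp P be) (join (label_of_aexp P e1) (label_of_aexp P e2))
  end
with label_of_bexp (P : pub_vars) (be : bexp) : label :=
  match be with
  | BTrue | BFalse => true
  | BCmp _ e1 e2 => join (label_of_aexp P e1) (label_of_aexp P e2)
  | BBin _ b1 b2 => join (label_of_bexp P b1) (label_of_bexp P b2)
  end.

Definition pub_equiv (P : pub_vars) (rho1 rho2 : reg) : Prop :=
  forall X, P X = true -> rho1 X = rho2 X.

Definition pub_equiv_arr (PA : pub_arrs) (mu1 mu2 : mem) : Prop :=
  forall a, PA a = true -> mu1 a = mu2 a.

Inductive well_typed (P : pub_vars) (PA : pub_arrs) : label -> com -> Prop :=
  | WT_Skip : forall pc, well_typed P PA pc Skip
  | WT_Asgn : forall pc X e,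
      can_flow (join pc (label_of_aexp P e)) (P X) = true ->
      well_typed P PA pc (Asgn X e)
  | WT_Seq : forall pc c1 c2,
      well_typed P PA pc c1 -> well_typed P PA pc c2 ->
      well_typed P PA pc (Seq c1 c2)
  | WT_If : forall pc be c1 c2,
      well_typed P PA (join pc (label_of_bexp P be)) c1 ->
      well_typed P PA (join pc (label_of_bexp P be)) c2 ->
      well_typed P PA pc (If be c1 c2)
  | WT_While : forall pc be c,
      well_typed P PA (join pc (label_of_bexp P be)) c ->
      well_typed P PA pc (While be c)
  | WT_ARead : forall pc X a i,
      can_flow (join pc (join (label_of_aexp P i) (PA a))) (P X) = true ->
      well_typed P PA pc (ARead X a i)
  | WT_AWrite : forall pc a i e,
      can_flow (join pc (join (label_of_aexp P i) (label_of_aexp P e))) (PA a) = true ->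
      well_typed P PA pc (AWrite a i e).

Fixpoint vars_aexp (e : aexp) : list var :=
  match e with
  | ANum _ => []
  | AId X => [X]
  | ABin _ e1 e2 => vars_aexp e1 ++ vars_aexp e2
  | ACTIf be e1 e2 => vars_bexp be ++ vars_aexp e1 ++ vars_aexp e2
  end
with vars_bexp (be : bexp) : list var :=
  match be with
  | BTrue | BFalse => []
  | BCmp _ e1 e2 => vars_aexp e1 ++ vars_aexp e2
  | BBin _ b1 b2 => vars_bexp b1 ++ vars_bexp b2
  end.

Fixpoint used_vars (c : com) : list var :=
  match c with
  | Skip => []
  | Asgn X e => X :: vars_aexp e
  | Seq c1 c2 => used_vars c1 ++ used_vars c2
  | If be c1 c2 => vars_bexp be ++ used_vars c1 ++ used_vars c2
  | While be c => vars_bexp be ++ used_vars c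
  | ARead X a i => X :: vars_aexp i
  | AWrite a i e => vars_aexp i ++ vars_aexp e
  end.

Definition msf : var := "b"%string.

Definition mask_index (i : aexp) : aexp :=
  ACTIf (BCmp Nat.eqb (AId msf) (ANum 1)) (ANum 0) i.

Definition guard (P : pub_vars) (be : bexp) : bexp :=
  if label_of_bexp P be then be
  else BBin andb (BCmp Nat.eqb (AId msf) (ANum 0)) be.

Fixpoint fvslh (P : pub_vars) (c : com) : com :=
  match c with
  | Skip => Skip
  | Asgn X e => Asgn X e
  | Seq c1 c2 => Seq (fvslh P c1) (fvslh P c2)
  | If be c1 c2 =>
      If (guard P be)
         (Seq (Asgn msf (ACTIf (guard P be) (AId msf) (ANum 1))) (fvslh P c1))
         (Seq (Asgn msf (ACTIf (guard P be) (ANum 1) (AId msf))) (fvslh P c2))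
  | While be c0 =>
      Seq (While (guard P be)
                 (Seq (Asgn msf (ACTIf (guard P be) (AId msf) (ANum 1))) (fvslh P c0)))
          (Asgn msf (ACTIf (guard P be) (ANum 1) (AId msf)))
  | ARead X a i =>
      if P X && label_of_aexp P i then
        Seq (ARead X a i)
            (Asgn X (ACTIf (BCmp Nat.eqb (AId msf) (ANum 1)) (ANum 0) (AId X)))
      else if label_of_aexp P i then ARead X a i
      else ARead X a (mask_index i)
  | AWrite a i e =>
      if label_of_aexp P i then AWrite a i e
      else AWrite a (mask_index i) e
  end.

(* Main.v *)
Require Import Defs.
From Stdlib Require Import Strings.String Bool Arith List Lia FunctionalExtensionality.
Import ListNotations.

Fixpoint nd (c : com) : nat :=
  match c with
  | Seq Skip _ => 0
  | Seq c1 _ => nd c1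
  | Asgn _ _ => 0
  | While _ _ => 0
  | _ => 1
  end.

Lemma skip_nostep : forall r m b d o cfg, ~ spec_step (Skip, r, m, b) d o cfg.
Proof. intros r m b d o cfg H; inversion H. Qed.

Lemma step_len : forall c r m b d o c' r' m' b',
  spec_step (c, r, m, b) d o (c', r', m', b') -> length d = nd c /\ length o = nd c.
Proof.
  intros c r m b d o c' r' m' b' H.
  remember (c, r, m, b) as x. remember (c', r', m', b') as y.
  revert c r m b c' r' m' b' Heqx Heqy.
  induction H; intros; inversion Heqx; subst; simpl; auto.
  destruct c1; try (exfalso; eapply skip_nostep; eassumption);
  eapply IHspec_step; eauto.
Qed.

Lemma multi_len : forall x ds os y, spec_multi x ds os y -> length os = length ds.
Proof.
  induction 1; auto. destruct cfg1 as [[[c r] m] b]; destruct cfg2 as [[[c' r'] m'] b'].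
  apply step_len in H. rewrite !length_app. lia.
Qed.

Lemma nd_le : forall c, nd c <= 1.
Proof. induction c; simpl; try lia. destruct c1; lia. Qed.

Lemma app_inv_len : forall {A} (l1 l2 l3 l4 : list A),
  l1 ++ l2 = l3 ++ l4 -> length l1 = length l3 -> l1 = l3 /\ l2 = l4.
Proof.
  induction l1; destruct l3; simpl; intros; try discriminate; auto.
  inversion H; subst. destruct (IHl1 l2 l3 l4); auto. subst; auto.
Qed.

Definition cfg := (com * reg * mem * bool)%type.
Definition cmd_of (x : cfg) : com := fst (fst (fst x)).

Section Lockstep.
Variable Rel : cfg -> cfg -> Prop.
Hypothesis Hsame : forall x y, Rel x y -> cmd_of x = cmd_of y.
Hypothesis Hstep : forall x y d o1 o2 x' y', Rel x y ->
  spec_step x d o1 x' -> spec_step y d o2 y' -> o1 = o2 /\ Rel x' y'.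

Lemma lockstep : forall x ds os1 x', spec_multi x ds os1 x' ->
  forall y os2 y', Rel x y -> spec_multi y ds os2 y' -> os1 = os2.
Proof.
  induction 1; intros y ob y' HR H2.
  - apply multi_len in H2. destruct ob; simpl in *; auto; discriminate.
  - inversion H2; subst.
    + destruct ds1; destruct ds2; try discriminate.
      destruct cfg1 as [[[c r] m] b]; destruct cfg2 as [[[c' r'] m'] b'].
      pose proof (step_len _ _ _ _ _ _ _ _ _ _ H) as [L1 L2].
      apply multi_len in H0. simpl in *.
      destruct os1; destruct os2; simpl in *; try lia. reflexivity.
    + destruct cfg1 as [[[c r] m] b]; destruct cfg2 as [[[c' r'] m'] b'].
      destruct y as [[[cy ry] my] by_]; destruct cfg4 as [[[c4 r4] m4] b4].
      pose proof (Hsame _ _ HR) as Hc. unfold cmd_of in Hc; simpl in Hc; subst cy.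
      pose proof (step_len _ _ _ _ _ _ _ _ _ _ H) as [L1 L2].
      pose proof (step_len _ _ _ _ _ _ _ _ _ _ H3) as [L3 L4].
      destruct (app_inv_len _ _ _ _ H1) as [E1 E2]; [lia|]. subst.
      destruct (Hstep _ _ _ _ _ _ _ HR H H3) as [Eo HR']. subst.
      f_equal. eapply IHspec_multi; eauto.
Qed.
End Lockstep.

Lemma step_seq_inv : forall c1 c2 r m b d o c' r' m' b',
  spec_step (Seq c1 c2, r, m, b) d o (c', r', m', b') ->
  (exists c1', spec_step (c1, r, m, b) d o (c1', r', m', b') /\ c' = Seq c1' c2) \/
  (c1 = Skip /\ d = [] /\ o = [] /\ c' = c2 /\ r' = r /\ m' = m /\ b' = b).
Proof. intros. inversion H; subst; eauto 10. Qed.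

Lemma step_det : forall c r1 m1 b1 r2 m2 b2 d o c1 r1' m1' b1' c2 r2' m2' b2',
  spec_step (c, r1, m1, b1) d o (c1, r1', m1', b1') ->
  spec_step (c, r2, m2, b2) d o (c2, r2', m2', b2') -> c1 = c2.
Proof.
  intros c r1 m1 b1 r2 m2 b2 d o c1 r1' m1' b1' c2 r2' m2' b2' H.
  remember (c, r1, m1, b1) as x. remember (c1, r1', m1', b1') as y.
  revert c r1 m1 b1 c1 r1' m1' b1' Heqx Heqy c2 r2' m2' b2'.
  induction H; intros c0 r0 m0 b0 c3 r3 m3 b3 Hx Hy cc rr mm bb H2;
    inversion Hx; inversion Hy; subst; clear Hx Hy;
    inversion H2; subst; auto.
  all: try (f_equal; eauto; fail).
  all: try match goal with H : spec_step (Skip,_,_,_) _ _ _ |- _ => inversion H end.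
  all: try match goal with H : [OBranch _] = [OBranch _] |- _ => inversion H; subst end.
  all: try congruence.
Qed.

Scheme aexp_ind2 := Induction for aexp Sort Prop
  with bexp_ind2 := Induction for bexp Sort Prop.
Combined Scheme exp_ind from aexp_ind2, bexp_ind2.

Section Typ.
Variable P : pub_vars.
Variable PA : pub_arrs.

Lemma label_eq : forall r1 r2, pub_equiv P r1 r2 ->
  (forall e, label_of_aexp P e = true -> aeval r1 e = aeval r2 e) /\
  (forall b, label_of_bexp P b = true -> beval r1 b = beval r2 b).
Proof.
  intros r1 r2 Hp. apply exp_ind; simpl; unfold join; intros;
    repeat match goal with H : _ && _ = true |- _ => apply andb_prop in H; destruct H end;
    auto;
    repeat match goal with H : ?A -> _, H' : ?A |- _ => specialize (H H') end;
    try congruence; match goal with H : beval r1 ?b = beval r2 ?b |- _ => rewrite H; destruct (beval r2 b); congruence end.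
Qed.

Lemma upd_same : forall r X, upd_reg r X (r X) = r.
Proof.
  intros. apply functional_extensionality. intros Y. unfold upd_reg.
  destruct (String.eqb_spec Y X); subst; auto.
Qed.

Lemma upd_eq : forall r X v, upd_reg r X v X = v.
Proof. intros. unfold upd_reg. rewrite String.eqb_refl. auto. Qed.

Lemma upd_neq : forall r X Y v, Y <> X -> upd_reg r X v Y = r Y.
Proof. intros. unfold upd_reg. destruct (String.eqb_spec Y X); congruence. Qed.

Lemma guard_b0 : forall r be, r msf = 0 -> beval r (guard P be) = beval r be.
Proof. intros. unfold guard. destruct (label_of_bexp P be); simpl; auto. rewrite H. auto. Qed.

Lemma mask_b0 : forall r i, r msf = 0 -> aeval r (mask_index i) = aeval r i.
Proof. intros. simpl. rewrite H. auto. Qed.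

Inductive wtl : com -> Prop :=
  | L_Skip : wtl Skip
  | L_Asgn X e : X <> msf -> (P X = true -> label_of_aexp P e = true) -> wtl (Asgn X e)
  | L_Seq c1 c2 : wtl c1 -> wtl c2 -> wtl (Seq c1 c2)
  | L_If be c1 c2 : wtl c1 -> wtl c2 -> wtl (If be c1 c2)
  | L_While be c : wtl c -> wtl (While be c)
  | L_Read X a i : X <> msf -> (P X = true -> label_of_aexp P i = true /\ PA a = true) ->
      wtl (ARead X a i)
  | L_Write a i e : (PA a = true -> label_of_aexp P i = true /\ label_of_aexp P e = true) ->
      wtl (AWrite a i e).

Lemma wt_wtl : forall pc c, well_typed P PA pc c -> ~ In msf (used_vars c) -> wtl c.
Proof.
  induction 1; simpl; intros Hn; try constructor;
    try (apply IHwell_typed1; intro; apply Hn; repeat (apply in_or_app; auto; right); fail);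
    try (apply IHwell_typed2; intro; apply Hn; repeat (apply in_or_app; auto; right); fail);
    try (apply IHwell_typed; intro; apply Hn; repeat (apply in_or_app; auto; right); fail);
    try (intro; subst; apply Hn; auto; fail);
    unfold can_flow, join in *; intros HX; try rewrite HX in *; simpl in *;
    rewrite orb_false_r in H;
    repeat match goal with H : _ && _ = true |- _ => apply andb_prop in H; destruct H end;
    auto.
Qed.

Definition pe0 (e : aexp) := forall r1 r2, r1 msf = 0 -> r2 msf = 0 -> pub_equiv P r1 r2 ->
  aeval r1 e = aeval r2 e.

Inductive wtt : com -> Prop :=
  | T_Skip : wtt Skip
  | T_Asgn X e : (X <> msf -> P X = true -> pe0 e) -> wtt (Asgn X e)
  | T_Seq c1 c2 : wtt c1 -> wtt c2 -> wtt (Seq c1 c2)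
  | T_If be c1 c2 : wtt c1 -> wtt c2 -> wtt (If be c1 c2)
  | T_While be c : wtt c -> wtt (While be c)
  | T_Read X a i : X <> msf -> (P X = true -> PA a = true) -> wtt (ARead X a i)
  | T_Write a i e : (PA a = true -> pe0 e) -> wtt (AWrite a i e).

Lemma wtt_fvslh : forall c, wtl c -> wtt (fvslh P c).
Proof.
  induction 1; simpl; repeat constructor; auto; try (intros; congruence).
  - intros _ HX r1 r2 _ _ Hp. apply label_eq; auto.
  - destruct (P X) eqn:HX; simpl.
    + destruct (H0 eq_refl) as [Hi Ha]. rewrite Hi. repeat constructor; auto.
      intros _ _ r1 r2 E1 E2 Hp. simpl. rewrite E1, E2. simpl. auto.
    + destruct (label_of_aexp P i); constructor; auto; congruence.
  - destruct (label_of_aexp P i) eqn:Hi; constructor; intros Ha r1 r2 _ _ Hp;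
      apply label_eq; auto; apply H; auto.
Qed.

Lemma wtt_step : forall c r m b d o c' r' m' b',
  wtt c -> spec_step (c, r, m, b) d o (c', r', m', b') -> wtt c'.
Proof.
  intros c r m b d o c' r' m' b' Hw H.
  remember (c, r, m, b) as x. remember (c', r', m', b') as y.
  revert c r m b c' r' m' b' Heqx Heqy Hw.
  induction H; intros; inversion Heqx; inversion Heqy; subst; clear Heqx Heqy;
    inversion Hw; subst; try constructor; eauto.
  all: try match goal with |- context [beval ?r ?b] => destruct (beval r b) end;
    simpl; repeat constructor; auto.
Qed.
End Typ.

Inductive mode := MClean | MDirty (X : var) | MPend (e : aexp).

Section Phase2.
Variable P : pub_vars.
Variable PA : pub_arrs.

Definition pe_a (e : aexp) := forall r1 r2, r1 msf = 1 -> r2 msf = 1 -> pub_equiv P r1 r2 ->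
  aeval r1 e = aeval r2 e.
Definition pe_b (e : bexp) := forall r1 r2, r1 msf = 1 -> r2 msf = 1 -> pub_equiv P r1 r2 ->
  beval r1 e = beval r2 e.
Definition one_a (e : aexp) := forall r, r msf = 1 -> aeval r e = 1.
Definition zero_a (e : aexp) := forall r, r msf = 1 -> aeval r e = 0.

Inductive wt2 : mode -> com -> Prop :=
  | W_Skip : wt2 MClean Skip
  | W_Asgn X e : X <> msf -> (P X = true -> pe_a e) -> wt2 MClean (Asgn X e)
  | W_AsgnM e : one_a e -> wt2 MClean (Asgn msf e)
  | W_Seq m c1 c2 : wt2 m c1 -> wt2 MClean c2 -> wt2 m (Seq c1 c2)
  | W_SeqSkip m c : wt2 m c -> wt2 m (Seq Skip c)
  | W_If be c1 c2 : pe_b be -> wt2 MClean c1 -> wt2 MClean c2 -> wt2 MClean (If be c1 c2)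
  | W_While be c : pe_b be -> wt2 MClean c -> wt2 MClean (While be c)
  | W_Read X a i : X <> msf -> P X = false -> pe_a i -> wt2 MClean (ARead X a i)
  | W_ZRead X a i e : X <> msf -> pe_a i -> zero_a e ->
      wt2 MClean (Seq (ARead X a i) (Asgn X e))
  | W_Write a i e : pe_a i -> wt2 MClean (AWrite a i e)
  | W_Dirty X e : X <> msf -> zero_a e -> wt2 (MDirty X) (Asgn X e)
  | W_Pend e : wt2 (MPend e) (Asgn msf e).

Definition eqvm (m : mode) (r1 r2 : reg) : Prop :=
  match m with
  | MClean => r1 msf = 1 /\ r2 msf = 1 /\ pub_equiv P r1 r2
  | MDirty X => r1 msf = 1 /\ r2 msf = 1 /\
                (forall Y, P Y = true -> Y <> X -> r1 Y = r2 Y)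
  | MPend e => pub_equiv P r1 r2 /\ aeval r1 e = 1 /\ aeval r2 e = 1
  end.

Lemma pe_label : forall e, label_of_aexp P e = true -> pe_a e.
Proof. intros e H r1 r2 _ _ Hp. apply (proj1 (label_eq P r1 r2 Hp)); auto. Qed.

Lemma pe_guard : forall be, pe_b (guard P be).
Proof.
  intros be r1 r2 E1 E2 Hp. unfold guard. destruct (label_of_bexp P be) eqn:Hl.
  - apply (proj2 (label_eq P r1 r2 Hp)); auto.
  - simpl. rewrite E1, E2. auto.
Qed.

Lemma pe_mask : forall i, pe_a (mask_index i).
Proof. intros i r1 r2 E1 E2 _. simpl. rewrite E1, E2. auto. Qed.

Lemma one_then : forall g, one_a (ACTIf g (AId msf) (ANum 1)).
Proof. intros g r E. simpl. destruct (beval r g); auto. Qed.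
Lemma one_else : forall g, one_a (ACTIf g (ANum 1) (AId msf)).
Proof. intros g r E. simpl. destruct (beval r g); auto. Qed.

Lemma wt2_fvslh : forall c, wtl P PA c -> wt2 MClean (fvslh P c).
Proof.
  induction 1; simpl.
  - constructor.
  - constructor; auto. intros; apply pe_label; auto.
  - constructor; auto.
  - constructor. apply pe_guard.
    + constructor; auto. apply W_AsgnM; apply one_then.
    + constructor; auto. apply W_AsgnM; apply one_else.
  - constructor. constructor. apply pe_guard. constructor; auto. apply W_AsgnM; apply one_then.
    apply W_AsgnM; apply one_else.
  - destruct (P X) eqn:HX; simpl.
    + destruct (H0 eq_refl) as [Hi Ha]. rewrite Hi. apply W_ZRead; auto.
      apply pe_label; auto. intros r E. simpl. rewrite E. auto.
    + destruct (label_of_aexp P i) eqn:Hi; constructor; auto.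
      apply pe_label; auto. apply pe_mask.
  - destruct (label_of_aexp P i) eqn:Hi; constructor.
    apply pe_label; auto. apply pe_mask.
Qed.

Lemma wt2_skip : forall m, wt2 m Skip -> m = MClean.
Proof. intros m H; inversion H; auto. Qed.

Lemma wt2_pend_uniq : forall m c, wt2 m c -> forall e1 e2, m = MPend e1 -> wt2 (MPend e2) c -> e1 = e2.
Proof.
  induction 1; intros e1 e2 Hm H2; try discriminate; inversion H2; subst; eauto.
  - apply wt2_skip in H. discriminate.
  - apply wt2_skip in H4. discriminate.
  - congruence.
Qed.

End Phase2.

Section P2.
Variable P : pub_vars.
Variable PA : pub_arrs.

Lemma upd_pub : forall r1 r2 X v1 v2, pub_equiv P r1 r2 -> (P X = true -> v1 = v2) ->
  pub_equiv P (upd_reg r1 X v1) (upd_reg r2 X v2).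
Proof.
  intros r1 r2 X v1 v2 Hp Hv Y HY. unfold upd_reg.
  destruct (String.eqb_spec Y X); subst; auto.
Qed.

Lemma p2_step : forall m c, wt2 P m c -> forall r1 m1 r2 m2 d o1 o2 c1 r1' m1' b1' c2 r2' m2' b2',
  eqvm P m r1 r2 ->
  spec_step (c, r1, m1, true) d o1 (c1, r1', m1', b1') ->
  spec_step (c, r2, m2, true) d o2 (c2, r2', m2', b2') ->
  o1 = o2 /\ c1 = c2 /\ b1' = true /\ b2' = true /\ exists m', wt2 P m' c1 /\ eqvm P m' r1' r2'.
Proof.
  induction 1; intros r1 m1 r2 m2 d o1 o2 c1' r1' m1' b1' c2' r2' m2' b2' He S1 S2.
  - inversion S1.
  -
    inversion S1; inversion S2; subst. destruct He as [E1 [E2 Hp]].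
    repeat split; auto. exists MClean. split; [constructor|]. simpl.
    split; [rewrite upd_neq; auto|]. split; [rewrite upd_neq; auto|].
    apply upd_pub; auto. intros HX. apply H0; auto.
  -
    inversion S1; inversion S2; subst. destruct He as [E1 [E2 Hp]].
    repeat split; auto. exists MClean. split; [constructor|]. simpl.
    rewrite !upd_eq, !H; auto. repeat split; auto. intros Y HY; unfold upd_reg; destruct (String.eqb_spec Y msf); auto.
  -
    apply step_seq_inv in S1; apply step_seq_inv in S2.
    destruct S1 as [[c1a [S1 Ec1]] | [Ec [Ed [Eo [Ec' [Er [Em Eb]]]]]]];
    destruct S2 as [[c2a [S2 Ec2]] | [Ec2 [Ed2 [Eo2 [Ec2' [Er2 [Em2 Eb2]]]]]]]; subst.
    + destruct (IHwt2_1 _ _ _ _ _ _ _ _ _ _ _ _ _ _ _ He S1 S2) as [Eo [Ec [Eb1 [Eb2 [m' [Hw He']]]]]].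
      subst. repeat split; auto. exists m'. split; auto. constructor; auto.
    + exfalso; eapply skip_nostep; eauto.
    + exfalso; eapply skip_nostep; eauto.
    + apply wt2_skip in H. subst. repeat split; auto. exists MClean; auto.
  -
    apply step_seq_inv in S1; apply step_seq_inv in S2.
    destruct S1 as [[c1a [S1 Ec1]] | [Ec [Ed [Eo [Ec' [Er [Em Eb]]]]]]];
      [exfalso; eapply skip_nostep; eauto|].
    destruct S2 as [[c2a [S2 Ec2]] | [Ec2 [Ed2 [Eo2 [Ec2' [Er2 [Em2 Eb2]]]]]]];
      [exfalso; eapply skip_nostep; eauto|]. subst. repeat split; auto. exists m; auto.
  -
    destruct He as [E1 [E2 Hp]]. pose proof (H r1 r2 E1 E2 Hp) as Hb.
    inversion S1; inversion S2; subst; try discriminate; rewrite Hb;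
      repeat split; auto; exists MClean; split; simpl; auto;
      match goal with |- context[beval ?r be] => destruct (beval r be) end; simpl; auto.
  -
    inversion S1; inversion S2; subst. repeat split; auto. exists MClean. split; auto.
    constructor; auto. constructor; auto. constructor; auto. constructor.
  -
    destruct He as [E1 [E2 Hp]]. pose proof (H1 r1 r2 E1 E2 Hp) as Hi.
    inversion S1; inversion S2; subst; try discriminate;
      repeat match goal with Hx : [_] = [_] |- _ => inversion Hx; subst; clear Hx end;
      rewrite Hi; (split; [auto|]); (split; [auto|]); (split; [auto|]); (split; [auto|]);
      exists MClean; (split; [apply W_Skip|]); simpl;
      (split; [rewrite upd_neq; auto|]); (split; [rewrite upd_neq; auto|]);
      apply upd_pub; auto; congruence.
  -
    destruct He as [E1 [E2 Hp]]. pose proof (H0 r1 r2 E1 E2 Hp) as Hi.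
    apply step_seq_inv in S1; apply step_seq_inv in S2.
    destruct S1 as [[c1a [S1 Ec1]] | [Ec [Ed [Eo [Ec' [Er [Em Eb]]]]]]]; [|discriminate].
    destruct S2 as [[c2a [S2 Ec2]] | [Ec2 [Ed2 [Eo2 [Ec2' [Er2 [Em2 Eb2]]]]]]]; [|discriminate].
    subst.
    inversion S1; inversion S2; subst; try discriminate;
      repeat match goal with Hx : [_] = [_] |- _ => inversion Hx; subst; clear Hx end;
      rewrite Hi; repeat split; auto; exists (MDirty X); split;
      try (apply W_SeqSkip; apply W_Dirty; auto); simpl;
      (split; [rewrite upd_neq; auto|]); (split; [rewrite upd_neq; auto|]);
      intros Y HY HYX; rewrite !upd_neq; auto.
  -
    destruct He as [E1 [E2 Hp]]. pose proof (H r1 r2 E1 E2 Hp) as Hi.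
    inversion S1; inversion S2; subst; try discriminate;
      repeat match goal with Hx : [_] = [_] |- _ => inversion Hx; subst; clear Hx end;
      rewrite Hi; repeat split; auto; exists MClean; split; try constructor; simpl; auto.
  -
    inversion S1; inversion S2; subst. destruct He as [E1 [E2 Hp]].
    repeat split; auto. exists MClean. split; [constructor|]. simpl.
    split; [rewrite upd_neq; auto|]. split; [rewrite upd_neq; auto|].
    intros Y HY. unfold upd_reg. destruct (String.eqb_spec Y X); subst; auto.
    rewrite !H0; auto.
  -
    inversion S1; inversion S2; subst. destruct He as [Hp [E1 E2]].
    repeat split; auto. exists MClean. split; [constructor|]. simpl.
    rewrite !upd_eq. split; auto. split; auto. apply upd_pub; auto. congruence.
Qed.
End P2.

Section P1.
Variable P : pub_vars.
Variable PA : pub_arrs.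

Definition BodyT be c := Seq (Asgn msf (ACTIf (guard P be) (AId msf) (ANum 1))) (fvslh P c).
Definition WT be c := While (guard P be) (BodyT be c).
Definition AT be := Asgn msf (ACTIf (guard P be) (ANum 1) (AId msf)).

Lemma fvslh_while : forall be c, fvslh P (While be c) = Seq (WT be c) (AT be).
Proof. reflexivity. Qed.

Inductive R (rho : reg) : com -> com -> Prop :=
  | R_Id c : wtl P PA c -> R rho (fvslh P c) c
  | R_Seq t s c2 : R rho t s -> wtl P PA c2 -> R rho (Seq t (fvslh P c2)) (Seq s c2)
  | R_WSeq t s be c : R rho t s -> wtl P PA c ->
      R rho (Seq (Seq t (WT be c)) (AT be)) (Seq s (While be c))
  | R_WIf be c : wtl P PA c ->
      R rho (Seq (If (guard P be) (Seq (BodyT be c) (WT be c)) Skip) (AT be))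
            (If be (Seq c (While be c)) Skip)
  | R_Nop X e t s : aeval rho e = rho X -> R rho t s -> R rho (Seq (Asgn X e) t) s
  | R_NopSkip X e : aeval rho e = rho X -> R rho (Asgn X e) Skip
  | R_SkipL t s : R rho t s -> R rho (Seq Skip t) s.

Definition SimP (rho : reg) (ct cs : com) : Prop :=
 forall mu d o ct' rho' mu' bf', rho msf = 0 ->
  spec_step (ct, rho, mu, false) d o (ct', rho', mu', bf') ->
  (d = [DForce] -> (exists s', seq_step (cs, rho, mu) o s') /\
     exists e, wt2 P (MPend e) ct' /\ aeval rho e = 1 /\ rho' = rho /\ mu' = mu /\ bf' = true) /\
  (d <> [DForce] -> bf' = false /\ rho' msf = 0 /\
     ((d = [] /\ o = [] /\ rho' = rho /\ mu' = mu /\ R rho ct' cs) \/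
      (exists cs', seq_step (cs, rho, mu) o (cs', rho', mu') /\ R rho' ct' cs'))).

Lemma fvslh_skip : forall c, fvslh P c = Skip -> c = Skip.
Proof.
  destruct c; simpl; intros H; try discriminate; auto.
  - destruct (P X && label_of_aexp P i); try discriminate.
    destruct (label_of_aexp P i); discriminate.
  - destruct (label_of_aexp P i); discriminate.
Qed.

Lemma R_skip : forall rho s, R rho Skip s -> s = Skip.
Proof. intros rho s H. inversion H; subst. match goal with Hx : fvslh P _ = Skip |- _ => rewrite Hx; apply fvslh_skip; auto end. Qed.

Lemma sim_seq : forall rho t s c2, R rho t s -> SimP rho t s -> wtl P PA c2 ->
  SimP rho (Seq t (fvslh P c2)) (Seq s c2).
Proof.
  intros rho t s c2 HR HS Hw mu d o ct' rho' mu' bf' E S.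
  apply step_seq_inv in S.
  destruct S as [[t1 [S Ect]] | [Et [Ed [Eo [Ec [Er [Em Eb]]]]]]].
  - subst. destruct (HS _ _ _ _ _ _ _ E S) as [HF HN]. split.
    + intros Hd. destruct (HF Hd) as [[[[cs'' r''] m''] Hs] [e [Hw2 [He [Er [Em Eb]]]]]].
      split. eexists. apply SS_Seq. eauto.
      exists e. repeat split; auto. constructor; auto. apply (wt2_fvslh P PA); auto.
    + intros Hd. destruct (HN Hd) as [Eb [Er [[Ed [Eo [Er' [Em HR']]]] | [cs' [Hs HR']]]]].
      * repeat split; auto. left. repeat split; auto. constructor; auto.
      * repeat split; auto. right. exists (Seq cs' c2). split. constructor; auto.
        constructor; auto.
  - subst. apply R_skip in HR. subst. split; [intros; discriminate|].
    intros _. repeat split; auto. right. exists c2. split. constructor. constructor; auto.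
Qed.

Lemma sim_wseq : forall rho t s be c, R rho t s -> SimP rho t s -> wtl P PA c ->
  SimP rho (Seq (Seq t (WT be c)) (AT be)) (Seq s (While be c)).
Proof.
  intros rho t s be c HR HS Hw mu d o ct' rho' mu' bf' E S.
  pose proof (wt2_fvslh P PA (While be c) (L_While _ _ _ _ Hw)) as HW2.
  rewrite fvslh_while in HW2. inversion HW2; subst.
  apply step_seq_inv in S.
  destruct S as [[t0 [S Ect]] | [Et [Ed [Eo [Ec [Er [Em Eb]]]]]]]; [|discriminate].
  apply step_seq_inv in S.
  destruct S as [[t1 [S Ect1]] | [Et [Ed [Eo [Ec [Er [Em Eb]]]]]]].
  - subst. destruct (HS _ _ _ _ _ _ _ E S) as [HF HN]. split.
    + intros Hd. destruct (HF Hd) as [[[[cs'' r''] m''] Hs] [e [Hw2 [He [Er [Em Eb]]]]]].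
      split. eexists. apply SS_Seq. eauto.
      exists e. repeat split; auto. constructor; auto. constructor; auto.
    + intros Hd. destruct (HN Hd) as [Eb [Er [[Ed [Eo [Er' [Em HR']]]] | [cs' [Hs HR']]]]].
      * repeat split; auto. left. repeat split; auto. constructor; auto.
      * repeat split; auto. right. exists (Seq cs' (While be c)). split. constructor; auto.
        constructor; auto.
  - subst. apply R_skip in HR. subst. split; [intros; discriminate|].
    intros _. repeat split; auto. right. exists (While be c). split. constructor.
    rewrite <- fvslh_while. constructor. constructor; auto.
Qed.

End P1.

Section P1b.
Variable P : pub_vars.
Variable PA : pub_arrs.

Lemma R_skip0 : forall rho, R P PA rho Skip Skip.
Proof. intros. exact (R_Id P PA rho Skip (L_Skip P PA)). Qed.

Lemma sim_id : forall rho c, wtl P PA c -> SimP P PA rho (fvslh P c) c.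
Proof.
  intros rho c Hw. induction Hw; intros mu d o ct' rho' mu' bf' E S; simpl in S.
  - inversion S.
  - inversion S; subst. split; [intros; discriminate|]. intros _.
    repeat split; auto. rewrite upd_neq; auto. right. eexists. split. constructor.
    apply R_skip0.
  - eapply sim_seq; eauto. constructor; auto.
  - inversion S; subst.
    + split; [intros; discriminate|]. intros _. repeat split; auto. right.
      rewrite guard_b0 by auto. eexists. split. constructor.
      destruct (beval rho' be) eqn:Hb.
      * apply R_Nop. simpl. rewrite guard_b0, Hb by auto. auto. constructor; auto.
      * apply R_Nop. simpl. rewrite guard_b0, Hb by auto. auto. constructor; auto.
    + split; [|intros H; exfalso; apply H; auto]. intros _. split.
      * rewrite guard_b0 by auto. eexists. constructor.
      * rewrite guard_b0 by auto. destruct (beval rho' be) eqn:Hb; simpl.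
        -- eexists. split. constructor. apply W_Pend. apply (wt2_fvslh P PA); auto.
           simpl. rewrite guard_b0, Hb by auto. auto.
        -- eexists. split. constructor. apply W_Pend. apply (wt2_fvslh P PA); auto.
           simpl. rewrite guard_b0, Hb by auto. auto.
  - apply step_seq_inv in S.
    destruct S as [[t0 [S Ect]] | [Et [Ed [Eo [Ec [Er [Em Eb]]]]]]]; [|discriminate].
    inversion S; subst. split; [intros; discriminate|]. intros _.
    repeat split; auto. right. eexists. split. constructor. constructor; auto.
  - destruct (P X && label_of_aexp P i) eqn:Hz.
    + apply step_seq_inv in S.
      destruct S as [[t0 [S Ect]] | [Et [Ed [Eo [Ec [Er [Em Eb]]]]]]]; [|discriminate].
      inversion S; subst. split; [intros; discriminate|]. intros _.
      repeat split; auto. rewrite upd_neq; auto. right. eexists. split. constructor; eauto.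
      apply R_SkipL. apply R_NopSkip. simpl. rewrite upd_neq by auto. rewrite E. auto.
    + destruct (label_of_aexp P i).
      * inversion S; subst. split; [intros; discriminate|]. intros _.
        repeat split; auto. rewrite upd_neq; auto. right. eexists. split.
        constructor; eauto. apply R_skip0.
      * inversion S; subst. split; [intros; discriminate|]. intros _.
        repeat split; auto. rewrite upd_neq; auto. right. eexists. split.
        rewrite mask_b0 by auto. constructor; eauto. rewrite <- mask_b0 with (i := i) by auto. auto.
        apply R_skip0.
  - destruct (label_of_aexp P i).
    + inversion S; subst. split; [intros; discriminate|]. intros _.
      repeat split; auto. right. eexists. split. constructor; eauto. apply R_skip0.
    + inversion S; subst. split; [intros; discriminate|]. intros _.
      repeat split; auto. right. eexists. split.
      rewrite mask_b0 by auto. constructor; eauto. rewrite <- mask_b0 with (i := i) by auto. auto.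
      apply R_skip0.
Qed.
End P1b.

Section P1c.
Variable P : pub_vars.
Variable PA : pub_arrs.

Lemma sim_all : forall rho ct cs, R P PA rho ct cs -> SimP P PA rho ct cs.
Proof.
  intros rho ct cs HR. induction HR.
  - apply sim_id; auto.
  - apply sim_seq; auto.
  - apply sim_wseq; auto.
  - intros mu d o ct' rho' mu' bf' E S.
    pose proof (wt2_fvslh P PA (While be c) (L_While _ _ _ _ H)) as HW2.
    rewrite fvslh_while in HW2. inversion HW2; subst.
    apply step_seq_inv in S.
    destruct S as [[t0 [S Ect]] | [Et [Ed [Eo [Ec [Er [Em Eb]]]]]]]; [|discriminate].
    subst. inversion S; subst.
    + split; [intros; discriminate|]. intros _. repeat split; auto. right.
      rewrite guard_b0 by auto. eexists. split. constructor.
      destruct (beval rho' be) eqn:Hb.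
      * apply (R_WSeq P PA rho' (BodyT P be c) c be c); auto. apply R_Nop.
        simpl. rewrite guard_b0, Hb by auto. auto. constructor; auto.
      * apply R_SkipL. apply R_NopSkip. simpl. rewrite guard_b0, Hb by auto. auto.
    + split; [|intros Hx; exfalso; apply Hx; auto]. intros _. split.
      * rewrite guard_b0 by auto. eexists. constructor.
      * rewrite guard_b0 by auto. destruct (beval rho' be) eqn:Hb; simpl.
        -- eexists. split. apply W_SeqSkip. apply W_Pend.
           simpl. rewrite guard_b0, Hb by auto. auto.
        -- eexists. split. apply W_Seq; auto. apply W_Seq; auto. apply W_Seq.
           apply W_Pend. apply (wt2_fvslh P PA); auto.
           simpl. rewrite guard_b0, Hb by auto. auto.
  - intros mu d o ct' rho' mu' bf' E S.
    apply step_seq_inv in S.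
    destruct S as [[t0 [S Ect]] | [Et [Ed [Eo [Ec [Er [Em Eb]]]]]]]; [|discriminate].
    inversion S; subst. split; [intros; discriminate|]. intros _.
    rewrite H, upd_same. repeat split; auto. left. repeat split; auto. apply R_SkipL; auto.
  - intros mu d o ct' rho' mu' bf' E S.
    inversion S; subst. split; [intros; discriminate|]. intros _.
    rewrite H, upd_same. repeat split; auto. left. repeat split; auto. apply R_skip0.
  - intros mu d o ct' rho' mu' bf' E S.
    apply step_seq_inv in S.
    destruct S as [[t0 [S Ect]] | [Et [Ed [Eo [Ec [Er [Em Eb]]]]]]].
    + exfalso; eapply skip_nostep; eauto.
    + subst. split; [intros; discriminate|]. intros _. repeat split; auto. left; auto.
Qed.
End P1c.

Section Pub.
Variable P : pub_vars.
Variable PA : pub_arrs.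

Lemma pub1 : forall ct r1 m1 d o c1' r1' m1' b1',
  spec_step (ct, r1, m1, false) d o (c1', r1', m1', b1') ->
  forall r2 m2 c2' r2' m2' b2',
  wtt P PA ct -> pub_equiv P r1 r2 -> pub_equiv_arr PA m1 m2 -> r1 msf = 0 -> r2 msf = 0 ->
  spec_step (ct, r2, m2, false) d o (c2', r2', m2', b2') -> r1' msf = r2' msf ->
  pub_equiv P r1' r2' /\ pub_equiv_arr PA m1' m2'.
Proof.
  intros ct r1 m1 d o c1' r1' m1' b1' S1.
  remember (ct, r1, m1, false) as x. remember (c1', r1', m1', b1') as y.
  revert ct r1 m1 c1' r1' m1' b1' Heqx Heqy.
  induction S1; intros ct0 r0 m0 c0 r0' m0' b0' Hx Hy; inversion Hx; inversion Hy; subst;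
    clear Hx Hy; intros r2 m2 c2' r2' m2' b2' Hw Hp Ha E1 E2 S2 Eb.
  - inversion S2; subst. inversion Hw; subst. split; auto.
    intros Y HY. unfold upd_reg in *. destruct (String.eqb_spec Y X); subst; auto.
    destruct (String.eqb_spec X msf); subst.
    + rewrite String.eqb_refl in Eb. auto.
    + match goal with Hh : _ -> _ -> pe0 _ _ |- _ => apply Hh; auto end.
  - apply step_seq_inv in S2. inversion Hw; subst.
    destruct S2 as [[c2a [S2 Ec2]] | [Ec [Ed [Eo [Ec' [Er [Em Eb']]]]]]].
    + eapply IHS1; eauto.
    + subst. exfalso; eapply skip_nostep; eauto.
  - inversion S2; subst; auto.
    exfalso; eapply skip_nostep; eauto.
  - inversion S2; subst; auto.
  - inversion S2; subst; auto.
  - inversion S2; subst; auto.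
  - inversion S2; subst. inversion Hw; subst. split; auto.
    intros Y HY. unfold upd_reg in *. destruct (String.eqb_spec Y X); subst; auto.
    match goal with Hh : P _ = true -> PA _ = true |- _ => rewrite (Ha a (Hh HY)) end. auto.
  - inversion S2; subst. inversion Hw; subst. split; auto.
    intros a' Ha'. unfold upd_mem. destruct (String.eqb_spec a' a); subst; auto.
    rewrite (Ha a Ha'). match goal with Hh : PA _ = true -> pe0 _ _ |- _ => rewrite (Hh Ha' _ _ E1 E2 Hp) end. auto.
Qed.
End Pub.

Lemma seq_multi_snoc : forall s O s1 o s2, seq_multi s O s1 -> seq_step s1 o s2 ->
  seq_multi s (O ++ o) s2.
Proof.
  induction 1; intros.
  - simpl. rewrite <- (app_nil_r o). econstructor; eauto. constructor.
  - rewrite <- app_assoc. econstructor; eauto.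
Qed.

Lemma obs_eq : forall c0 rho1 mu1 rho2 mu2 O s1 o1 s1' s2 o2 s2',
  seq_same_obs c0 rho1 mu1 c0 rho2 mu2 ->
  seq_multi (c0, rho1, mu1) O s1 -> seq_step s1 o1 s1' ->
  seq_multi (c0, rho2, mu2) O s2 -> seq_step s2 o2 s2' ->
  length o1 = 1 -> length o2 = 1 -> o1 = o2.
Proof.
  intros. destruct s1' as [[? ?] ?]; destruct s2' as [[? ?] ?].
  destruct (H _ _ _ _ (seq_multi_snoc _ _ _ _ _ H0 H1) (seq_multi_snoc _ _ _ _ _ H2 H3))
    as [[l Hl] | [l Hl]]; rewrite <- app_assoc in Hl; apply app_inv_head in Hl; subst;
    rewrite length_app in *; destruct l; simpl in *; try lia; rewrite app_nil_r; auto.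
Qed.

Lemma dforce_dec : forall d : dirs, {d = [DForce]} + {d <> [DForce]}.
Proof.
  intros d. destruct d as [|x [|y l]]; try (right; discriminate).
  destruct x; [right|left|right|right]; congruence.
Qed.

Section Main.
Variable P : pub_vars.
Variable PA : pub_arrs.
Variable c0 : com.
Variables rho1 rho2 : reg.
Variables mu1 mu2 : mem.
Hypothesis Hseq : seq_same_obs c0 rho1 mu1 c0 rho2 mu2.

Definition Rel1 (x y : cfg) : Prop :=
  match x, y with
  | (ct, r1, m1, b1), (ct2, r2, m2, b2) =>
    ct = ct2 /\ b1 = false /\ b2 = false /\ r1 msf = 0 /\ r2 msf = 0 /\
    pub_equiv P r1 r2 /\ pub_equiv_arr PA m1 m2 /\ wtt P PA ct /\
    exists O cs1 cs2, R P PA r1 ct cs1 /\ R P PA r2 ct cs2 /\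
      seq_multi (c0, rho1, mu1) O (cs1, r1, m1) /\ seq_multi (c0, rho2, mu2) O (cs2, r2, m2)
  end.

Definition Rel2 (x y : cfg) : Prop :=
  match x, y with
  | (ct, r1, m1, b1), (ct2, r2, m2, b2) =>
    ct = ct2 /\ b1 = true /\ b2 = true /\ exists m, wt2 P m ct /\ eqvm P m r1 r2
  end.

Definition Rel x y := Rel1 x y \/ Rel2 x y.

Lemma Rel_same : forall x y, Rel x y -> cmd_of x = cmd_of y.
Proof.
  intros [[[c r] m] b] [[[c' r'] m'] b'] [H|H]; simpl in H; unfold cmd_of; simpl; tauto.
Qed.

Lemma Rel_step : forall x y d o1 o2 x' y', Rel x y ->
  spec_step x d o1 x' -> spec_step y d o2 y' -> o1 = o2 /\ Rel x' y'.
Proof.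
  intros [[[c r1] m1] b1] [[[c' r2] m2] b2] d o1 o2 [[[c1 r1'] m1'] b1'] [[[c2 r2'] m2'] b2']
    [HR|HR] S1 S2; simpl in HR.
  - destruct HR as [Ec [Eb1 [Eb2 [E1 [E2 [Hp [Ha [Hw [O [cs1 [cs2 [R1 [R2 [M1 M2]]]]]]]]]]]]]].
    subst c' b1 b2.
    pose proof (step_len _ _ _ _ _ _ _ _ _ _ S1) as [L1 L1'].
    pose proof (step_len _ _ _ _ _ _ _ _ _ _ S2) as [L2 L2'].
    destruct (sim_all P PA _ _ _ R1 _ _ _ _ _ _ _ E1 S1) as [F1 N1].
    destruct (sim_all P PA _ _ _ R2 _ _ _ _ _ _ _ E2 S2) as [F2 N2].
    destruct (dforce_dec d) as [Hd|Hd].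
    + subst d. destruct (F1 eq_refl) as [[s1 Hs1] [e1 [W1 [Ee1 [Er1 [Em1 Eb1]]]]]].
      destruct (F2 eq_refl) as [[s2 Hs2] [e2 [W2 [Ee2 [Er2 [Em2 Eb2]]]]]].
      assert (Eo : o1 = o2).
      { eapply obs_eq; eauto; simpl in *; lia. }
      subst o2. split; auto.
      pose proof (step_det _ _ _ _ _ _ _ _ _ _ _ _ _ _ _ _ _ S1 S2). subst c2.
      pose proof (wt2_pend_uniq P _ _ W1 e1 e2 eq_refl W2). subst e2.
      subst. right. simpl. repeat split; auto. exists (MPend e1). split; auto.
      simpl. auto.
    + destruct (N1 Hd) as [Eb1 [Er1 A1]]. destruct (N2 Hd) as [Eb2 [Er2 A2]].
      assert (Eo : o1 = o2).
      { destruct d as [|x [|y l]]; simpl in *.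
        - destruct o1; destruct o2; simpl in *; try lia; auto.
        - destruct A1 as [[Hx _] | [cs1' [Hs1 _]]]; [discriminate|].
          destruct A2 as [[Hx _] | [cs2' [Hs2 _]]]; [discriminate|].
          eapply obs_eq; eauto; lia.
        - pose proof (nd_le c). lia. }
      subst o2. split; auto.
      pose proof (step_det _ _ _ _ _ _ _ _ _ _ _ _ _ _ _ _ _ S1 S2). subst c2.
      left. simpl. subst b1' b2'.
      destruct (pub1 P PA _ _ _ _ _ _ _ _ _ S1 _ _ _ _ _ _ Hw Hp Ha E1 E2 S2 ltac:(congruence))
        as [Hp' Ha'].
      repeat split; auto. eapply wtt_step; eauto.
      exists (O ++ o1).
      destruct A1 as [[Hd1 [Ho1 [Er1' [Em1' R1']]]] | [cs1' [Hs1 R1']]];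
      destruct A2 as [[Hd2 [Ho2 [Er2' [Em2' R2']]]] | [cs2' [Hs2 R2']]]; subst.
      all: eexists; eexists; repeat split; eauto;
        try (eapply seq_multi_snoc; eauto; fail); rewrite app_nil_r; auto.
  - destruct HR as [Ec [Eb1 [Eb2 [m [Hw He]]]]]. subst c' b1 b2.
    destruct (p2_step P m c Hw _ _ _ _ _ _ _ _ _ _ _ _ _ _ _ He S1 S2)
      as [Eo [Ec [Eb1 [Eb2 [m' [Hw' He']]]]]].
    subst. split; auto. right. simpl. repeat split; auto. exists m'. auto.
Qed.

End Main.

Theorem theorem6p1 :
  forall (P : pub_vars) (PA : pub_arrs) (c : com)
         (rho1 rho2 : reg) (mu1 mu2 : mem),
    ~ In msf (used_vars c) ->
    rho1 msf = 0 -> rho2 msf = 0 ->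
    (forall a, 0 < length (mu1 a)) ->
    (forall a, 0 < length (mu2 a)) ->
    well_typed P PA true c ->
    pub_equiv P rho1 rho2 ->
    pub_equiv_arr PA mu1 mu2 ->
    seq_same_obs c rho1 mu1 c rho2 mu2 ->
    spec_same_obs (fvslh P c) rho1 mu1 false (fvslh P c) rho2 mu2 false.
Proof.
  intros P PA c rho1 rho2 mu1 mu2 Hn E1 E2 _ _ Hwt Hp Ha Hs.
  intros ds cfg1 cfg2 os1 os2 M1 M2.
  assert (Hw : wtl P PA c) by (eapply wt_wtl; eauto).
  assert (HR : Rel P PA c rho1 rho2 mu1 mu2 (fvslh P c, rho1, mu1, false) (fvslh P c, rho2, mu2, false)).
  { left. simpl. repeat split; auto. apply wtt_fvslh; auto.
    exists [], c, c. repeat split; try constructor; auto. }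
  exact (lockstep _ (Rel_same P PA c rho1 rho2 mu1 mu2) (Rel_step P PA c rho1 rho2 mu1 mu2 Hs)
    _ _ _ _ M1 _ _ _ HR M2).
Qed.
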